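(* Let $\theta\in(0,\pi/2]$ be a Pythagorean angle, i.e. $\cos\theta=s/r$ and $\sin\theta=t/r$ are both rational, with $r,s\in\mathbb{Z}$, $0\le|s|<r$, $\gcd(r,s)=1$. Then: (i) $\mathcal{N}_\theta=\mathbb{N}$; (ii) for every $n\in\mathcal{N}_\theta$ there are infinitely many distinct $\theta$-parallelogram envelopes for $n$; (iii) for every $n\in\mathcal{N}_\theta$ there are infinitely many rational numbers $m\ge1$ such that $n\in\mathcal{N}_{\theta,m}$.
   Context: A $\theta$-parallelogram envelope for a natural number $n$ is a quintuple of positive rationals $(a,b,c,d,e)$ with $a^2+b^2-\frac{2s}{r}ab=c^2$, $a^2+d^2+\frac{2s}{r}ad=e^2$, and $a(b+d)=rn$; $\mathcal{N}_\theta$ is the set of natural numbers admitting one. For a positive rational $m$, $\mathcal{N}_{\theta,m}$ is the set of natural numbers $n$ admitting such an envelope with additionally $d=mb$. *)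

(* Defs.v *)
From mathcomp Require Import all_boot all_order all_algebra.
Set Implicit Arguments. Unset Strict Implicit. Unset Printing Implicit Defensive.
Import Order.TTheory GRing.Theory Num.Theory.
Local Open Scope ring_scope.

(* The angle theta enters only through cos(theta) = s/r. *)

Definition is_envelope (r s : int) (n : nat) (a b c d e : rat) : Prop :=
  [/\ 0 < a, 0 < b, 0 < c, 0 < d & 0 < e] /\
  a ^+ 2 + b ^+ 2 - 2 * (s%:~R / r%:~R) * a * b = c ^+ 2 /\
  a ^+ 2 + d ^+ 2 + 2 * (s%:~R / r%:~R) * a * d = e ^+ 2 /\
  a * (b + d) = r%:~R * n%:R.

Definition envelope_of (r s : int) (n : nat) (x : rat * rat * rat * rat * rat) : Prop :=
  let: (a, b, c, d, e) := x in is_envelope r s n a b c d e.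

Definition in_N_theta (r s : int) (n : nat) : Prop :=
  exists a b c d e, is_envelope r s n a b c d e.

Definition in_N_theta_m (r s : int) (m : rat) (n : nat) : Prop :=
  exists a b c d e, is_envelope r s n a b c d e /\ d = m * b.

(* Pythagorean angle theta in (0, pi/2]: cos theta = s/r, sin theta = t/r, with
   r, s integers, 0 <= |s| < r, gcd(r,s) = 1, t rational.  Since theta is in
   (0, pi/2], cos theta >= 0 and sin theta > 0, and such theta exists iff
   s >= 0 and some rational t > 0 has s^2 + t^2 = r^2. *)
Definition pythagorean_angle (r s : int) : Prop :=
  [/\ 0 <= s, `|s| < r, gcdz r s = 1 &
      exists t : rat, 0 < t /\ (s%:~R) ^+ 2 + t ^+ 2 = (r%:~R : rat) ^+ 2].

(* Main.v *)
Require Import Defs.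
From mathcomp Require Import all_boot all_order all_algebra.
From mathcomp Require Import ring lra.
Import Order.TTheory GRing.Theory Num.Theory.
Local Open Scope ring_scope.

Lemma key_ineq (R S t B e : rat) : 0 < R -> 0 <= S -> S <= R -> 0 < t -> t <= R ->
  1 <= B -> 0 < e -> e * (t + 10 * B * R) < t ->
  0 < t * (1 - e ^+ 2) * (2 + e) - 2 * e * (2 + e) * S
        - B * (t * e * (1 + e) * (3 + e) + 2 * e * (2 + e) * S).
Proof.
move=> R0 S0 SR t0 tR B1 e0 he.
have eBR : 0 < e * B * R by apply: mulr_gt0 => //; apply: mulr_gt0; lra.
have e1 : e < 1.
  rewrite ltNge; apply/negP => h.
  have : 0 <= (e - 1) * t by apply: mulr_ge0; lra.
  nra.
have h1 : 2 * t * (1 - e) <= t * (1 - e ^+ 2) * (2 + e).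
  have : 0 <= t * (1 - e) * (e * (3 + e)) by apply: mulr_ge0; nra.
  lra.
have h2 : 2 * e * (2 + e) * S <= 6 * e * R.
  have : 0 <= e * ((1 - e) * S + 3 * (R - S)) by apply: mulr_ge0; nra.
  lra.
have h3 : t * e * (1 + e) * (3 + e) <= 8 * e * R.
  have : 0 <= e * ((8 - (1 + e) * (3 + e)) * t + 8 * (R - t)) by apply: mulr_ge0; nra.
  lra.
have h4 : B * (t * e * (1 + e) * (3 + e) + 2 * e * (2 + e) * S) <= B * (14 * e * R).
  apply: ler_wpM2l; lra.
have : 6 * e * R <= B * (6 * e * R) by nra.
nra.
Qed.

Lemma construct_gen (R S t B N ep j : rat) : 0 < R -> 0 <= S -> 0 < t ->
  S ^+ 2 + t ^+ 2 = R ^+ 2 -> 0 < N -> 1 <= B -> 0 < ep -> 0 < j ->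
  ep * (2 + ep) = t * N * j ^+ 2 -> ep * (t + 10 * B * R) < t ->
  exists a b c d e : rat,
    ([/\ 0 < a, 0 < b, 0 < c, 0 < d & 0 < e] /\
     a ^+ 2 + b ^+ 2 - 2 * (S / R) * a * b = c ^+ 2 /\
     a ^+ 2 + d ^+ 2 + 2 * (S / R) * a * d = e ^+ 2 /\
     a * (b + d) = R * N) /\ B < d / b.
Proof.
move=> R0 S0 t0 Pyth N0 B1 ep0 j0 rel small.
have SR : S <= R.
  rewrite leNgt; apply/negP => h.
  have : R * R < S * S by apply: ltr_pM => //; lra.
  have : 0 < t * t by apply: mulr_gt0.
  move: Pyth; rewrite !expr2; lra.
have tR : t <= R.
  rewrite leNgt; apply/negP => h.
  have : R * R < t * t by apply: ltr_pM => //; lra.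
  have : 0 <= S * S by apply: mulr_ge0.
  move: Pyth; rewrite !expr2; lra.
have Rn : R != 0 by rewrite gt_eqF.
have epn : ep != 0 by rewrite gt_eqF.
have ep1n : 1 + ep != 0 by rewrite gt_eqF //; lra.
have ep2n : 2 + ep != 0 by rewrite gt_eqF //; lra.
pose a := R * N * j / (1 + ep).
pose X := t * (1 + ep) * (3 + ep) / (2 * R * (2 + ep)).
pose Y := t * (1 - ep ^+ 2) / (2 * R * ep).
pose k := S / R.
have k0 : 0 <= k by apply: divr_ge0; lra.
have a0 : 0 < a.
  apply: divr_gt0; [apply: mulr_gt0 => //; apply: mulr_gt0 => // | lra].
have X0 : 0 < X.
  apply: divr_gt0; first by apply: mulr_gt0; [apply: mulr_gt0 => //|]; lra.
  apply: mulr_gt0; [apply: mulr_gt0|]; lra.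
have key : 0 < Y - k - B * (X + k).
  have -> : Y - k - B * (X + k) =
     (t * (1 - ep ^+ 2) * (2 + ep) - 2 * ep * (2 + ep) * S
        - B * (t * ep * (1 + ep) * (3 + ep) + 2 * ep * (2 + ep) * S))
     / (2 * R * ep * (2 + ep)).
    rewrite /Y /k /X; field; rewrite ?ep2n ?epn ?Rn //.
  apply: divr_gt0; first exact: (key_ineq _ _ _ _ _ R0 S0 SR t0 tR B1 ep0 small).
  apply: mulr_gt0; [apply: mulr_gt0; [apply: mulr_gt0|]|]; lra.
have BXk : 0 < B * (X + k) by apply: mulr_gt0; lra.
exists a, (a * (X + k)), (a * (t * ((2 + ep) ^+ 2 + 1) / (2 * R * (2 + ep)))),
  (a * (Y - k)), (a * (t * (1 + ep ^+ 2) / (2 * R * ep))).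
split; last first.
  rewrite ltr_pdivlMr; last by apply: mulr_gt0; lra.
  have : 0 < a * (Y - k - B * (X + k)) by apply: mulr_gt0.
  lra.
split.
  split.
  - done.
  - apply: mulr_gt0; lra.
  - apply: mulr_gt0 => //; apply: divr_gt0.
      apply: mulr_gt0 => //; have := sqr_ge0 (2 + ep); lra.
    apply: mulr_gt0; [apply: mulr_gt0|]; lra.
  - apply: mulr_gt0; lra.
  - apply: mulr_gt0 => //; apply: divr_gt0.
      apply: mulr_gt0 => //; have := sqr_ge0 ep; lra.
    apply: mulr_gt0; [apply: mulr_gt0|]; lra.
split.
  apply/eqP; rewrite -subr_eq0; apply/eqP.
  have -> : a ^+ 2 + (a * (X + k)) ^+ 2 - 2 * (S / R) * a * (a * (X + k))
            - (a * (t * ((2 + ep) ^+ 2 + 1) / (2 * R * (2 + ep)))) ^+ 2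
          = a ^+ 2 * (R ^+ 2 - S ^+ 2 - t ^+ 2) / R ^+ 2.
    rewrite /X /k; field; rewrite ?ep2n ?Rn //.
  have -> : R ^+ 2 - S ^+ 2 - t ^+ 2 = 0 by rewrite -Pyth; ring.
  by rewrite mulr0 mul0r.
split.
  apply/eqP; rewrite -subr_eq0; apply/eqP.
  have -> : a ^+ 2 + (a * (Y - k)) ^+ 2 + 2 * (S / R) * a * (a * (Y - k))
            - (a * (t * (1 + ep ^+ 2) / (2 * R * ep))) ^+ 2
          = a ^+ 2 * (R ^+ 2 - S ^+ 2 - t ^+ 2) / R ^+ 2.
    rewrite /Y /k; field; rewrite ?epn ?Rn //.
  have -> : R ^+ 2 - S ^+ 2 - t ^+ 2 = 0 by rewrite -Pyth; ring.
  by rewrite mulr0 mul0r.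
apply/eqP; rewrite -subr_eq0; apply/eqP.
have -> : a * (a * (X + k) + a * (Y - k)) - R * N
   = R * N * (t * N * j ^+ 2 - ep * (2 + ep)) / (ep * (2 + ep)).
  rewrite /a /X /Y /k; field; rewrite ?ep2n ?epn ?Rn ?ep1n //.
by rewrite rel subrr mulr0 mul0r.
Qed.

Lemma construct (R S t B : rat) (n : nat) : 0 < R -> 0 <= S -> 0 < t ->
  S ^+ 2 + t ^+ 2 = R ^+ 2 -> (0 < n)%N -> 1 <= B ->
  exists a b c d e : rat,
    ([/\ 0 < a, 0 < b, 0 < c, 0 < d & 0 < e] /\
     a ^+ 2 + b ^+ 2 - 2 * (S / R) * a * b = c ^+ 2 /\
     a ^+ 2 + d ^+ 2 + 2 * (S / R) * a * d = e ^+ 2 /\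
     a * (b + d) = R * n%:R) /\ B < d / b.
Proof.
move=> R0 S0 t0 Pyth n0 B1.
have N0 : 0 < (n%:R : rat) by rewrite ltr0n.
set N := (n%:R : rat) in N0 *.
pose T := t * N.
have T0 : 0 < T by apply: mulr_gt0.
have BR : 0 < B * R by apply: mulr_gt0 => //; lra.
pose K := 1 + T + 2 * N * (t + 10 * B * R).
have NtB : 0 < N * (t + 10 * B * R) by apply: mulr_gt0 => //; lra.
have K1 : 1 <= K by rewrite /K; lra.
pose D := K ^+ 2 - T.
have KK : K <= K ^+ 2.
  have : 0 <= K * (K - 1) by apply: mulr_ge0; lra.
  rewrite expr2; lra.
have DB : 2 * N * (t + 10 * B * R) < D by rewrite /D /K in KK *; lra.
have D0 : 0 < D by lra.
have Dn : D != 0 by rewrite gt_eqF.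
apply: (@construct_gen R S t B N (2 * T / D) (2 * K / D)) => //.
- apply: divr_gt0 => //; lra.
- apply: divr_gt0 => //; lra.
- have gen : forall T' K' : rat, K' ^+ 2 - T' != 0 ->
    2 * T' / (K' ^+ 2 - T') * (2 + 2 * T' / (K' ^+ 2 - T')) =
    T' * (2 * K' / (K' ^+ 2 - T')) ^+ 2.
    by move=> T' K' h; field.
  exact: gen.
- have -> : 2 * T / D * (t + 10 * B * R) = (2 * T * (t + 10 * B * R)) / D.
    by rewrite mulrAC.
  rewrite ltr_pdivrMr //.
  have : 0 < t * (D - 2 * N * (t + 10 * B * R)) by apply: mulr_gt0; lra.
  rewrite /T; lra.
Qed.

Lemma mem_le_sum (L : seq rat) (x : rat) : x \in L -> x <= \sum_(y <- L) `|y|.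
Proof.
elim: L => [//|y L IH]; rewrite in_cons big_cons => /orP [/eqP -> | /IH h].
  have : 0 <= \sum_(y <- L) `|y| by apply: sumr_ge0 => i _; exact: normr_ge0.
  have := ler_norm y; lra.
have := normr_ge0 y; lra.
Qed.

Theorem theorem6p4 (r s : int) :
  pythagorean_angle r s ->
  (* (i) N_theta = N = {1,2,3,...} *)
  (forall n : nat, in_N_theta r s n <-> (0 < n)%N) /\
  (* (ii) infinitely many distinct envelopes for each n in N_theta *)
  (forall n : nat, in_N_theta r s n ->
     ~ exists l : seq (rat * rat * rat * rat * rat),
         forall x, envelope_of r s n x -> x \in l) /\
  (* (iii) infinitely many rationals m >= 1 with n in N_{theta,m} *)
  (forall n : nat, in_N_theta r s n ->
     ~ exists l : seq rat, forall m : rat, 1 <= m -> in_N_theta_m r s m n -> m \in l).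
Proof.
case=> s0 sr _ [t [t0 Pyth]].
have r0 : 0 < r by apply: le_lt_trans sr; exact: normr_ge0.
have R0 : 0 < (r%:~R : rat) by rewrite ltr0z.
have S0 : 0 <= (s%:~R : rat) by rewrite ler0z.
have pos : forall n, in_N_theta r s n -> (0 < n)%N.
  move=> n [a [b [c [d [e [[a0 b0 _ d0 _] [_ [_ E]]]]]]]].
  rewrite lt0n; apply/negP => /eqP n0; move: E; rewrite n0 mulr0.
  have : 0 < a * (b + d) by apply: mulr_gt0 => //; lra.
  lra.
have cons := fun n B => @construct _ _ t B n R0 S0 t0 Pyth.
split.
  move=> n; split; first exact: pos.
  move=> n0; have [a [b [c [d [e [H _]]]]]] := cons n 1 n0 (lexx _).
  by exists a, b, c, d, e.
split.
  move=> n /pos n0 [l Hl].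
  pose L := [seq x.1.2 / x.1.1.1.2 | x <- l].
  have B1 : 1 <= 1 + \sum_(y <- L) `|y|.
    have : 0 <= \sum_(y <- L) `|y| by apply: sumr_ge0 => i _; exact: normr_ge0.
    lra.
  have [a [b [c [d [e [H Hm]]]]]] := cons n _ n0 B1.
  have /(map_f (fun x : rat * rat * rat * rat * rat => x.1.2 / x.1.1.1.2)) /= hin :=
     Hl (a, b, c, d, e) H.
  have := @mem_le_sum _ _ hin; rewrite -/L; lra.
move=> n /pos n0 [l Hl].
have B1 : 1 <= 1 + \sum_(y <- l) `|y|.
  have : 0 <= \sum_(y <- l) `|y| by apply: sumr_ge0 => i _; exact: normr_ge0.
  lra.
have [a [b [c [d [e [H Hm]]]]]] := cons n _ n0 B1.
have b0 : 0 < b by case: H => [[]].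
have hin : d / b \in l.
  apply: Hl; first lra.
  exists a, b, c, d, e; split => //.
  by rewrite divfK // gt_eqF.
have := @mem_le_sum _ _ hin; lra.
Qed.
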